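(* Fix $\alpha>0$, $y_0\in\mathrm{dom}\, h$. Let TAA be: $\lambda=2\alpha/(\alpha+\sqrt{\alpha^2+4L\alpha})$, $s_0=\nabla f(y_0)$, $\tilde x_0=y_0$, $x_0=\mathrm{argmin}_x\{\langle s_0,x\rangle+h^\alpha(x)\}$, and for $k\ge0$: $\tilde x_{k+1}=(1-\lambda)y_k+\lambda x_k$, $s_{k+1}=(1-\lambda)s_k+\lambda\nabla f(\tilde x_{k+1})$, $x_{k+1}=\mathrm{argmin}_x\{\langle s_{k+1},x\rangle+h^\alpha(x)\}$, $y_{k+1}=(1-\lambda)y_k+\lambda x_{k+1}$. Let GEM with $\nu^*=Lf^*$ be: $g_0=z_0=\nabla f(y_0)$, $v_{-1}=v_0=\nabla(h^\alpha)^*(-g_0)$, $\tau_0=\alpha/L$, $A_0=1$, $a_{-1}=0$, and for $k\ge0$: $a_k=\frac{\tau_k+\sqrt{\tau_k^2+4\tau_kA_k}}{2}$, $\tau_{k+1}=\tau_k+\alpha a_k/L$, $A_{k+1}=A_k+a_k$, $\hat v_k=v_k+\frac{a_{k-1}}{a_k}(v_k-v_{k-1})$, $g_{k+1}=\mathrm{argmin}_g\{a_k[\langle-\hat v_k,g\rangle+f^*(g)]+\frac{\tau_k}{\alpha}\operatorname{D}_{\nu^*}(g\|g_k)\}$, $z_{k+1}=\frac{A_k}{A_{k+1}}z_k+\frac{a_k}{A_{k+1}}g_{k+1}$, $v_{k+1}=\nabla(h^\alpha)^*(-z_{k+1})$, where $\operatorname{D}_{\nu^*}(g\|g_k)=L[f^*(g)-f^*(g_k)-\langle\tilde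 x_k,g-g_k\rangle]$ (using the subgradient $\tilde x_k\in\partial f^*(g_k)$). Then the two methods are equivalent with, for all $k\ge0$, $\nabla f(\tilde x_k)=g_k$, $s_k=z_k$, and $x_k=v_k$.
   Context: Let $\|\cdot\|$ be a norm on $\mathbb{R}^n$ with dual norm $\|\cdot\|_*$. Let $f:\mathbb{R}^n\to\mathbb{R}$ be convex, differentiable and $L$-smooth ($L>0$) with respect to $\|\cdot\|$, $h:\mathbb{R}^n\to(-\infty,\infty]$ closed proper convex with bounded domain, and $w:\mathbb{R}^n\to[0,+\infty]$ closed, $1$-strongly convex with respect to $\|\cdot\|$ on $\mathrm{dom}\, h$, with $\max_{\mathrm{dom}\, h}w<\infty$. Let $h^\alpha=h+\alpha w$; $^*$ denotes convex conjugate ($(h^\alpha)^*$ is differentiable). *)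

(* Defs.v *)
From HB Require Import structures.
From mathcomp Require Import all_boot all_order all_algebra.
From mathcomp Require Import all_classical all_reals all_analysis.
Set Implicit Arguments. Unset Strict Implicit. Unset Printing Implicit Defensive.
Import Order.TTheory GRing.Theory Num.Theory.
Import numFieldNormedType.Exports.
Local Open Scope classical_set_scope.
Local Open Scope ring_scope.

Section Defs.
Variables (R : realType) (n : nat).
Notation V := 'rV[R]_n.

Definition dotp (s x : V) : R := \sum_(i < n) s 0 i * x 0 i.

Definition is_norm (nrm : V -> R) : Prop :=
  [/\ forall x, 0 <= nrm x,
      forall x, nrm x = 0 -> x = 0,
      forall (c : R) x, nrm (c *: x) = `|c| * nrm x &
      forall x y, nrm (x + y) <= nrm x + nrm y].

Definition dual_norm (nrm : V -> R) (s : V) : R :=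
  sup [set dotp s x | x in [set x | nrm x <= 1]].

Definition is_gradient (F : V -> R) (g : V -> V) : Prop :=
  forall x, differentiable F x /\ forall u, 'd F x u = dotp (g x) u.

Definition convex_fun (F : V -> R) : Prop :=
  forall x y (t : R), 0 <= t <= 1 ->
    F (t *: x + (1 - t) *: y) <= t * F x + (1 - t) * F y.

Definition smooth_wrt (nrm : V -> R) (L : R) (gradf : V -> V) : Prop :=
  forall x y, dual_norm nrm (gradf x - gradf y) <= L * nrm (x - y).

Definition edom (h : V -> \bar R) : set V := [set x | (h x < +oo)%E].

Definition eclosed (h : V -> \bar R) : Prop :=
  forall c : R, closed [set x | (h x <= c%:E)%E].

Definition eproper (h : V -> \bar R) : Prop :=
  (forall x, h x <> -oo%E) /\ exists x, (h x < +oo)%E.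

Definition econvex (h : V -> \bar R) : Prop :=
  forall (x y : V) (t : R), 0 < t < 1 ->
    (h (t *: x + (1 - t) *: y)%R <= t%:E * h x + (1 - t)%:E * h y)%E.

Definition ebounded_dom (nrm : V -> R) (h : V -> \bar R) : Prop :=
  exists M : R, forall x, edom h x -> nrm x <= M.

Definition strongly_convex_on (nrm : V -> R) (D : set V) (w : V -> \bar R) : Prop :=
  forall (x y : V) (t : R), D x -> D y -> 0 < t < 1 ->
    (w (t *: x + (1 - t) *: y)%R <=
       t%:E * w x + (1 - t)%:E * w y - (t * (1 - t) / 2 * nrm (x - y) ^+ 2)%:E)%E.

Definition conj_real (F : V -> R) (s : V) : \bar R :=
  ereal_sup [set ((dotp s x - F x)%:E) | x in [set: V]].

Definition conj_ext (h : V -> \bar R) (s : V) : \bar R :=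
  ereal_sup [set ((dotp s x)%:E - h x)%E | x in [set: V]].

Definition is_argmin (F : V -> \bar R) (x : V) : Prop :=
  forall y, (F x <= F y)%E.

End Defs.

(* u_{k-1} with u_{-1} := um1 *)
Definition prevseq {T : Type} (u : nat -> T) (um1 : T) (k : nat) : T :=
  if k is k'.+1 then u k' else um1.

(* Main.v *)
Require Import Defs.
From HB Require Import structures.
From mathcomp Require Import all_boot all_order all_algebra.
From mathcomp Require Import all_classical all_reals all_analysis.
From mathcomp Require Import ring lra.
Import Order.TTheory GRing.Theory Num.Theory.
Import numFieldNormedType.Exports.
Local Open Scope classical_set_scope.
Local Open Scope ring_scope.

Section D.
Variables (R : realType) (n : nat).
Implicit Types (s x y : 'rV[R]_n).

Lemma dotpDr s x y : dotp s (x + y) = dotp s x + dotp s y.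
Proof. by rewrite /dotp -big_split; apply: eq_bigr => i _; rewrite mxE mulrDr. Qed.
Lemma dotpDl s x y : dotp (x + y) s = dotp x s + dotp y s.
Proof. by rewrite /dotp -big_split; apply: eq_bigr => i _; rewrite mxE mulrDl. Qed.
Lemma dotpZr s (c : R) x : dotp s (c *: x) = c * dotp s x.
Proof. by rewrite /dotp mulr_sumr; apply: eq_bigr => i _; rewrite mxE mulrCA. Qed.
Lemma dotpZl s (c : R) x : dotp (c *: x) s = c * dotp x s.
Proof. by rewrite /dotp mulr_sumr; apply: eq_bigr => i _; rewrite mxE mulrA. Qed.
Lemma dotpNr s x : dotp s (- x) = - dotp s x.
Proof. by rewrite -scaleN1r dotpZr mulN1r. Qed.
Lemma dotpNl s x : dotp (- x) s = - dotp x s.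
Proof. by rewrite -scaleN1r dotpZl mulN1r. Qed.
Lemma dotpBr s x y : dotp s (x - y) = dotp s x - dotp s y.
Proof. by rewrite dotpDr dotpNr. Qed.
Lemma dotpBl s x y : dotp (x - y) s = dotp x s - dotp y s.
Proof. by rewrite dotpDl dotpNl. Qed.
Lemma dotpC s x : dotp s x = dotp x s.
Proof. by rewrite /dotp; apply: eq_bigr => i _; rewrite mulrC. Qed.
Lemma dotp0r (s : 'rV[R]_n) : dotp s 0 = 0.
Proof. by rewrite /dotp big1 // => i _; rewrite mxE mulr0. Qed.

Lemma dotp_self_eq0 (d : 'rV[R]_n) : dotp d d = 0 -> d = 0.
Proof.
move=> /eqP; rewrite /dotp psumr_eq0; last by move=> i _; rewrite -expr2 sqr_ge0.
move=> /allP H; apply/matrixP => i j; rewrite mxE (ord1 i).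
have := H j (mem_index_enum _); rewrite /= -expr2 sqrf_eq0 => /eqP //.
Qed.

Lemma dotp_bound p x : dotp p x <= (\sum_(j < n) `|p 0 j|) * `|x|.
Proof.
rewrite /dotp mulr_suml; apply: ler_sum => j _.
apply: le_trans (ler_norm _) _; rewrite normrM ler_wpM2l //.
rewrite [leRHS]/Num.norm /= mx_normrE.
by apply/bigmax_geP; right => /=; exists (0, j).
Qed.

Lemma deriv_ge (F : 'rV[R]_n -> R) q u c :
  differentiable F q ->
  (forall t : R, 0 < t <= 1 -> t * c <= F (q + t *: u) - F q) -> c <= 'd F q u.
Proof.
move=> dF H.
rewrite -deriveE //.
have dv := @diff_derivable _ _ _ F q u dF.
rewrite /derive.
set G := (fun h : R => _).
have dv' : G @ 0^'+ --> lim (G @ 0^').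
  apply: cvg_trans dv.
  move=> U /=; rewrite !near_simpl /= => -[e e0 He]; exists e => //= y ye yp.
  by apply: He => //; rewrite gt_eqF.
apply: (cvgr_to_ge dv').
near=> t.
have t0 : 0 < t by near: t; exact: nbhs_right_gt.
have t1 : t <= 1 by near: t; apply: nbhs_right_le; exact: ltr01.
rewrite /G /= /shift.
have := H t; rewrite t0 t1 => /(_ isT).
move=> Ht.
rewrite -[c](mulKf (lt0r_neq0 t0)) /GRing.scale /=.
rewrite ler_wpM2l //; last by rewrite [_ + q]addrC.
by apply: ltW; rewrite invr_gt0.
Unshelve. all: end_near.
Qed.

Lemma deriv_le (F : 'rV[R]_n -> R) q u c :
  differentiable F q ->
  (forall t : R, 0 < t <= 1 -> F (q + t *: u) - F q <= t * c) -> 'd F q u <= c.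
Proof.
move=> dF H.
rewrite -deriveE //.
have dv := @diff_derivable _ _ _ F q u dF.
rewrite /derive.
set G := (fun h : R => _).
have dv' : G @ 0^'+ --> lim (G @ 0^').
  apply: cvg_trans dv.
  move=> U /=; rewrite !near_simpl /= => -[e e0 He]; exists e => //= y ye yp.
  by apply: He => //; rewrite gt_eqF.
apply: (cvgr_to_le dv').
near=> t.
have t0 : 0 < t by near: t; exact: nbhs_right_gt.
have t1 : t <= 1 by near: t; apply: nbhs_right_le; exact: ltr01.
rewrite /G /= /shift.
have := H t; rewrite t0 t1 => /(_ isT).
move=> Ht.
rewrite -[c](mulKf (lt0r_neq0 t0)) /GRing.scale /=.
rewrite ler_wpM2l //; last by rewrite [_ + q]addrC.
by apply: ltW; rewrite invr_gt0.
Unshelve. all: end_near.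
Qed.

Lemma grad_unique (F : 'rV[R]_n -> R) g q G :
  is_gradient F g ->
  (forall u (t : R), 0 < t <= 1 -> t * dotp G u <= F (q + t *: u) - F q) ->
  g q = G.
Proof.
move=> Hg H; have [dF dE] := Hg q.
have Hu : forall u, dotp G u <= dotp (g q) u.
  by move=> u; rewrite -dE; apply: deriv_ge => //; exact: H.
suff : g q - G = 0 by move/eqP; rewrite subr_eq0 => /eqP.
apply: dotp_self_eq0.
apply/eqP; rewrite eq_le; apply/andP; split.
  rewrite dotpBl subr_le0; move: (Hu (-(g q - G))); rewrite !dotpNr lerN2.
  by [].
by rewrite dotpBl subr_ge0.
Qed.

Lemma grad_ineq (F : 'rV[R]_n -> R) g q x :
  is_gradient F g -> convex_fun F ->
  F q + dotp (g q) (x - q) <= F x.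
Proof.
move=> Hg cF; have [dF dE] := Hg q.
rewrite -lerBrDl -dE; apply: deriv_le => // t /andP[t0 t1].
have -> : q + t *: (x - q) = t *: x + (1 - t) *: q.
  by apply/matrixP => i j; rewrite !mxE; ring.
have := cF x q t; rewrite (ltW t0) t1 => /(_ isT) H.
lra.
Qed.
End D.
Section N.
Variables (R : realType) (n : nat) (nrm : 'rV[R]_n -> R).
Hypothesis Hn : is_norm nrm.

Lemma nrm0 : nrm 0 = 0.
Proof. case: Hn => _ _ hZ _. by rewrite -(scale0r 0) hZ normr0 mul0r. Qed.

Lemma nrmN x : nrm (- x) = nrm x.
Proof. case: Hn => _ _ hZ _. by rewrite -scaleN1r hZ normrN normr1 mul1r. Qed.

Lemma nrm_sum (I : Type) (r : seq I) (P : pred I) (F : I -> 'rV[R]_n) :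
  nrm (\sum_(i <- r | P i) F i) <= \sum_(i <- r | P i) nrm (F i).
Proof.
case: Hn => _ _ _ hD.
elim/big_rec2: _ => [|i y1 y2 _ IH]; first by rewrite nrm0.
by apply: le_trans (hD _ _) _; rewrite lerD2l.
Qed.

Lemma coord_le (x : 'rV[R]_n) i j : `|x i j| <= `|x|.
Proof.
rewrite [leRHS]/Num.norm /= mx_normrE.
apply/bigmax_geP; right => /=; by exists (i, j).
Qed.

Definition Cn := \sum_(j < n) nrm (delta_mx 0 j).

Lemma nrm_le x : nrm x <= Cn * `|x|.
Proof.
case: Hn => _ _ hZ _.
rewrite [x in nrm x]matrix_sum_delta big_ord1.
apply: le_trans; first exact: nrm_sum.
rewrite /Cn mulr_suml; apply: ler_sum => j _.
rewrite hZ mulrC ler_wpM2l //; first by case: Hn.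
exact: coord_le.
Qed.

Lemma nrm_cont : continuous nrm.
Proof.
move=> x. apply/(cvgrPdist_lt (FF := nbhs_filter x)) => e e0.
have C0 : 0 <= Cn by apply: sumr_ge0 => j _; case: Hn.
have C1 : 0 < Cn + 1 by exact: ltr_wpDl C0 ltr01.
near=> y.
have H1 : nrm x <= nrm y + nrm (x - y).
  by case: Hn => _ _ _ hD; rewrite -{1}(subrK y x) addrC hD.
have H2 : nrm y <= nrm x + nrm (y - x).
  by case: Hn => _ _ _ hD; rewrite -{1}(subrK x y) addrC hD.
have Hd : nrm (x - y) < e.
  apply: (le_lt_trans (nrm_le _)).
  rewrite -(@ltr_pM2l _ (Cn + 1)^-1); last by rewrite invr_gt0 ltr_wpDl.
  rewrite mulrA; apply: (@le_lt_trans _ _ `|x - y|).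
    rewrite ler_piMl // mulrC ler_pdivrMr ?ltr_wpDl // mul1r.
    by rewrite lerDl.
  rewrite mulrC; near: y.
  apply/nbhs_ballP; exists (e / (Cn + 1)); first by apply: divr_gt0.
  by move=> z; rewrite mx_norm_ball.
rewrite -opprB nrmN in H2.
rewrite ltr_norml; apply/andP; split; lra.
Unshelve. all: end_near.
Qed.

Lemma nrm_ge : exists2 m, 0 < m & forall x, m * `|x| <= nrm x.
Proof.
have nrm_ge0 : forall x, 0 <= nrm x by case: Hn.
set S := [set u : 'rV[R]_n | `|u| = 1].
have inS : forall x, x != 0 -> S (`|x|^-1 *: x).
  move=> x x0; rewrite /S /= normrZ ger0_norm ?invr_ge0 //.
  by rewrite mulVf // normr_eq0.
case: (pselect (S !=set0)) => [S0|S0]; last first.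
  exists 1 => // x; case: (eqVneq x 0) => [->|x0].
    by rewrite normr0 mulr0 nrm0.
  by exfalso; apply: S0; exists (`|x|^-1 *: x); exact: inS.
have cS : compact S.
  apply: bounded_closed_compact.
    exists 1; split => // M M1 x /= ->; exact: ltW.
  have -> : S = (fun u : 'rV[R]_n => `|u|) @^-1` [set 1] by [].
  by move: (@closed_eq R 1); apply: (continuous_closedP _).1; exact: norm_continuous.
have [c Sc Hc] := EVT_min_rV S0 cS (continuous_subspaceT nrm_cont).
have c0 : c != 0.
  by apply/eqP => c0; move: Sc; rewrite inE /S /= c0 normr0 => /esym/eqP; rewrite oner_eq0.
exists (nrm c).
  rewrite lt_def nrm_ge0 andbT; apply/eqP; case: Hn => _ H0 _ _ /H0 /eqP; exact/negP.
move=> x; case: (eqVneq x 0) => [->|x0]; first by rewrite normr0 mulr0 nrm0.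
have := Hc _ (mem_set (inS x x0)).
case: Hn => _ _ hZ _; rewrite hZ ger0_norm ?invr_ge0 //.
by rewrite ler_pdivlMl ?normr_gt0 // mulrC.
Qed.
End N.
Section F.
Variables (R : realType) (n : nat) (f : 'rV[R]_n -> R) (gradf : 'rV[R]_n -> 'rV[R]_n).
Hypotheses (Hgrad : is_gradient f gradf) (Hconv : convex_fun f).

Lemma F_ge g x : ((dotp g x - f x)%:E <= conj_real f g)%E.
Proof. by apply: ereal_sup_ubound; exists x. Qed.

Lemma F_grad q : conj_real f (gradf q) = (dotp (gradf q) q - f q)%:E.
Proof.
apply/eqP; rewrite eq_le F_ge andbT; apply: ge_ereal_sup => _ [x _ <-].
rewrite lee_fin.
have := @grad_ineq _ _ _ _ q x Hgrad Hconv; rewrite dotpBr; lra.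
Qed.

Lemma gem_step (L c1 c r : R) (vh xk gk gn : 'rV[R]_n) :
  0 < c1 -> 0 < c -> 0 < L -> conj_real f gk = r%:E ->
  is_argmin (fun u => ((c1)%:E * ((dotp (- vh) u)%:E + conj_real f u)
                  + c%:E *
                    (L%:E * (conj_real f u - conj_real f gk - (dotp xk (u - gk))%:E)))%E) gn ->
  gn = gradf ((c1 + c * L)^-1 *: (c1 *: vh + (c * L) *: xk)).
Proof.
move=> c10 c0 L0 Fgk Hmin.
set K := c1 + c * L.
have K0 : 0 < K by rewrite /K addr_gt0 // mulr_gt0.
set q := K^-1 *: _.
set g' := gradf q.
have H := Hmin g'; rewrite /= F_grad Fgk in H.
case E: (conj_real f gn) => [r1| |]; last first.
- by have := F_ge gn 0; rewrite E.
- exfalso; move: H; rewrite E.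
  rewrite addey // gt0_muley // (addye _) // addye // gt0_muley // gt0_muley // addye //.
rewrite E -?EFinB -?EFinD -?EFinM -?EFinB -?EFinD -?EFinM -?EFinD -?EFinM -?EFinD -?EFinM lee_fin in H.
apply/esym/(@grad_unique _ _ _ _ _ _ Hgrad) => u t /andP[t0 t1].
have := F_ge gn (q + t *: u); rewrite E lee_fin => Hr1.
have P1 : K * dotp gn q = c1 * dotp vh gn + c * L * dotp xk gn.
  rewrite /q dotpZr mulrA mulfV ?lt0r_neq0 // mul1r dotpDr !dotpZr.
  by rewrite [dotp gn vh]dotpC [dotp gn xk]dotpC.
have P2 : K * dotp g' q = c1 * dotp vh g' + c * L * dotp xk g'.
  rewrite /q dotpZr mulrA mulfV ?lt0r_neq0 // mul1r dotpDr !dotpZr.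
  by rewrite [dotp g' vh]dotpC [dotp g' xk]dotpC.
move: H Hr1; rewrite !dotpNl !dotpBr dotpDr dotpZr => H Hr1.
have Hr1K := ler_wpM2l (ltW K0) Hr1.
rewrite -subr_ge0 -(pmulr_rge0 _ K0).
rewrite /K in P1 P2 Hr1K *.
nra.
Qed.
End F.
Lemma fine_ge (R : realType) (v M : R) (e : \bar R) :
  (v%:E <= e)%E -> (e <= M%:E)%E -> v <= fine e.
Proof. by case: e => [r| |] //=; rewrite lee_fin. Qed.

Lemma fine_le (R : realType) (v M : R) (e : \bar R) :
  (M%:E <= e)%E -> (e <= v%:E)%E -> fine e <= v.
Proof. by case: e => [r| |] //=; rewrite lee_fin. Qed.

Lemma taa_argmin (R : realType) n (h w : 'rV[R]_n -> \bar R) (alpha : R)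
  (gradhc : 'rV[R]_n -> 'rV[R]_n) (y0 : 'rV[R]_n) (B : R) (s xk : 'rV[R]_n) :
  0 < alpha -> eproper h -> (forall u, (0 <= w u)%E) ->
  (forall u, edom h u -> `|u| <= B) ->
  edom h y0 -> (exists M : R, forall u, edom h u -> (w u <= M%:E)%E) ->
  is_gradient (fun u => fine (conj_ext (fun u => (h u + alpha%:E * w u)%E) u)) gradhc ->
  is_argmin (fun u => ((dotp s u)%:E + (fun u => (h u + alpha%:E * w u)%E) u)%E) xk ->
  gradhc (- s) = xk.
Proof.
move=> a0 [hN _] w0 hB y0d [M wM] Hg Hmin.
set ha := (fun u => (h u + alpha%:E * w u)%E) in Hg Hmin.
have aw0 : forall u, (0 <= alpha%:E * w u)%E by move=> u; rewrite mule_ge0 // lee_fin ltW.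
have haN : forall u, ha u != -oo%E.
  move=> u; rewrite /ha; move: (hN u) (aw0 u).
  by case: (h u) => [r| |] //; case: (alpha%:E * w u)%E => [r'| |].
have hay0 : (ha y0 < +oo)%E.
  apply: lte_add_pinfty; first exact: y0d.
  apply: (@le_lt_trans _ _ (alpha * M)%:E); last exact: ltry.
  by rewrite EFinM lee_pmul2l ?lte_fin //; exact: wM.
have Hx : ((dotp s xk)%:E + ha xk <= (dotp s y0)%:E + ha y0)%E := Hmin y0.
have [hx Ehx] : exists hx, ha xk = hx%:E.
  move: Hx (haN xk); case: (ha xk) => [hx _ _| |]; first by exists hx.
    rewrite addey // leye_eq => /eqP E.
    by move: (lte_add_pinfty (ltry (dotp s y0)) hay0); rewrite E ltxx.
  by [].
have Hbd : forall p u, ((dotp p u)%:E - ha u <=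
    (dotp (- s) xk - hx + (\sum_(j < n) `|(p + s) 0 j|) * B)%:E)%E.
  move=> p u.
  have Hu : ((dotp s xk)%:E + ha xk <= (dotp s u)%:E + ha u)%E := Hmin u.
  move: Hu (haN u); rewrite Ehx.
  case Eu: (ha u) => [hu| |] //; last by move=> _ _; rewrite addeNy leNye.
  rewrite -!EFinD !lee_fin => Hu _.
  have hud : edom h u.
    rewrite /edom /=; move: Eu; rewrite /ha.
    move: (aw0 u); case: (h u) => [r| |] //; first by move=> *; exact: ltry.
    by case: (alpha%:E * w u)%E.
  have := hB u hud => uB.
  have S0 : 0 <= \sum_(j < n) `|(p + s) 0 j| by apply: sumr_ge0.
  have := @dotp_bound _ _ (p + s) u; rewrite dotpDl => Hd.
  have Hd2 := ler_wpM2l S0 uB.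
  rewrite dotpNl; lra.
have Hc1 : forall p, ((dotp p xk - hx)%:E <= conj_ext ha p)%E.
  by move=> p; apply: ereal_sup_ubound; exists xk => //; rewrite Ehx.
have Hc2 : forall p,
    (conj_ext ha p <= (dotp (- s) xk - hx + (\sum_(j < n) `|(p + s) 0 j|) * B)%:E)%E.
  by move=> p; apply: ge_ereal_sup => _ [u _ <-]; exact: Hbd.
apply: (@grad_unique _ _ _ _ _ _ Hg) => u t /andP[t0 t1].
have A1 := @fine_ge _ _ _ _ (Hc1 (- s + t *: u)) (Hc2 _).
have A2 := @fine_le _ _ _ _ (Hc1 (- s)) (Hc2 _).
rewrite (_ : \sum_(j < n) `|(- s + s) 0 j| = 0) in A2; last first.
  by rewrite big1 // => j _; rewrite addNr mxE normr0.
move: A1; rewrite dotpDl dotpZl [dotp u xk]dotpC; lra.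
Qed.
Theorem proposition5p3
  (R : realType) (n : nat)
  (nrm : 'rV[R]_n -> R)
  (f : 'rV[R]_n -> R) (gradf : 'rV[R]_n -> 'rV[R]_n) (L : R)
  (h w : 'rV[R]_n -> \bar R)
  (alpha : R)
  (gradhc : 'rV[R]_n -> 'rV[R]_n)
  (y0 : 'rV[R]_n)
  (* TAA sequences *)
  (xt s x y : nat -> 'rV[R]_n)
  (* GEM sequences *)
  (g z v : nat -> 'rV[R]_n) (tau A a : nat -> R) :
  (* standing assumptions *)
  is_norm nrm ->
  is_gradient f gradf -> convex_fun f -> 0 < L -> smooth_wrt nrm L gradf ->
  eclosed h -> eproper h -> econvex h -> ebounded_dom nrm h ->
  (forall u, (0 <= w u)%E) -> eclosed w ->
  strongly_convex_on nrm (edom h) w ->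
  (exists M : R, forall u, edom h u -> (w u <= M%:E)%E) ->
  let halpha := fun u => (h u + alpha%:E * w u)%E in
  (* gradhc is the gradient of (h^alpha)^* *)
  is_gradient (fun u => fine (conj_ext halpha u)) gradhc ->
  0 < alpha -> edom h y0 ->
  (* TAA *)
  let lambda := 2 * alpha / (alpha + Num.sqrt (alpha ^+ 2 + 4 * L * alpha)) in
  s 0%N = gradf y0 -> xt 0%N = y0 -> y 0%N = y0 ->
  (forall k, is_argmin (fun u => ((dotp (s k) u)%:E + halpha u)%E) (x k)) ->
  (forall k, xt k.+1 = (1 - lambda) *: y k + lambda *: x k) ->
  (forall k, s k.+1 = (1 - lambda) *: s k + lambda *: gradf (xt k.+1)) ->
  (forall k, y k.+1 = (1 - lambda) *: y k + lambda *: x k.+1) ->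
  (* GEM with nu^* = L f^* *)
  let fstar := conj_real f in
  g 0%N = gradf y0 -> z 0%N = gradf y0 ->
  tau 0%N = alpha / L -> A 0%N = 1 ->
  (forall k, a k = (tau k + Num.sqrt (tau k ^+ 2 + 4 * tau k * A k)) / 2) ->
  (forall k, tau k.+1 = tau k + alpha * a k / L) ->
  (forall k, A k.+1 = A k + a k) ->
  (forall k, v k = gradhc (- z k)) ->
  (forall k,
     let vhat := v k + (prevseq a 0 k / a k) *: (v k - prevseq v (v 0%N) k) in
     is_argmin
       (fun u => ((a k)%:E * ((dotp (- vhat) u)%:E + fstar u)
                  + (tau k / alpha)%:E *
                    (L%:E * (fstar u - fstar (g k) - (dotp (xt k) (u - g k))%:E)))%E)
       (g k.+1)) ->
  (forall k, z k.+1 = (A k / A k.+1) *: z k + (a k / A k.+1) *: g k.+1) ->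
  (* equivalence *)
  forall k, gradf (xt k) = g k /\ s k = z k /\ x k = v k.
Proof.
move=> Hn Hgrad Hconv L0 Hsm hcl hprop hcv hbd w0 wcl wsc wM halpha Hgc al0 y0d.
move=> lambda Hs0 Hxt0 Hy0 Hx Hxt Hs Hy fstar Hg0 Hz0 Htau0 HA0 Ha Htau HA Hv Hg Hz.
have [B hB] : exists B, forall u, edom h u -> `|u| <= B.
  case: hbd => Mh HM; have [m m0 Hm] := @nrm_ge _ _ _ Hn.
  exists (Mh / m) => u /HM uM; rewrite ler_pdivlMr // mulrC.
  exact: le_trans (Hm u) uM.
have Hxv : forall k, gradhc (- s k) = x k.
  move=> k; apply: (@taa_argmin _ _ h w alpha gradhc y0 B) => //.
set t := alpha / L.
have t0 : 0 < t by rewrite divr_gt0.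
set S := Num.sqrt (t ^+ 2 + 4 * t).
have S0 : 0 <= S by exact: sqrtr_ge0.
have HS2 : S ^+ 2 = t ^+ 2 + 4 * t.
  by rewrite sqr_sqrtr // addr_ge0 // ?sqr_ge0 // mulr_ge0 // ltW.
have a0E : a 0%N = (t + S) / 2 by rewrite Ha Htau0 HA0 mulr1.
have akE : forall k, tau k = t * A k -> 0 < A k -> a k = A k * a 0%N.
  move=> k Et A0; rewrite Ha Et a0E.
  suff -> : Num.sqrt ((t * A k) ^+ 2 + 4 * (t * A k) * A k) = A k * S by ring.
  rewrite (_ : _ + _ = A k ^+ 2 * (t ^+ 2 + 4 * t)); last by ring.
  by rewrite sqrtrM ?sqr_ge0 // sqrtr_sqr ger0_norm // ltW.
have a00 : 0 < a 0%N by rewrite a0E divr_gt0 // ltr_wpDr.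
have Hseq : forall k, tau k = t * A k /\ 0 < A k.
  elim => [|k [IHt IHA]]; first by rewrite Htau0 HA0 mulr1.
  rewrite Htau HA (akE k IHt IHA) IHt; split.
    by rewrite /t; field; rewrite lt0r_neq0.
  by rewrite addr_gt0 // mulr_gt0.
have Hak : forall k, a k = A k * a 0%N.
  by move=> k; have [? ?] := Hseq k; exact: akE.
have L0' : L != 0 by rewrite lt0r_neq0.
have alE : alpha = t * L by rewrite /t divfK.
have lamE : lambda * (1 + a 0%N) = a 0%N.
  have sqE : Num.sqrt (alpha ^+ 2 + 4 * L * alpha) = L * S.
    rewrite (_ : alpha ^+ 2 + 4 * L * alpha = L ^+ 2 * (t ^+ 2 + 4 * t)); last first.
      by rewrite alE; ring.
    by rewrite sqrtrM ?sqr_ge0 // sqrtr_sqr ger0_norm // ltW.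
  have tS0 : t + S != 0 by rewrite lt0r_neq0 // ltr_wpDr.
  have key : 2 * t * (2 + t + S) = (t + S) ^+ 2 by rewrite sqrrD HS2; ring.
  rewrite /lambda sqE a0E alE.
  rewrite (_ : 2 * (t * L) / (t * L + L * S) * (1 + (t + S) / 2) = t * (2 + t + S) / (t + S)); last first.
    by field; rewrite tS0 /= [t * L]mulrC -mulrDr mulf_neq0.
  have h2 : 2 * (t + S) != 0 by rewrite mulf_neq0 // pnatr_eq0.
  apply: (mulIf h2).
  transitivity (2 * t * (2 + t + S)); first by field.
  by rewrite key; field.
have Apos : forall k, 0 < A k by move=> k; case: (Hseq k).
have HAk1 : forall k, A k.+1 = A k * (1 + a 0%N) by move=> k; rewrite HA Hak; ring.
have a1 : 1 + a 0%N != 0 by rewrite lt0r_neq0 // addr_gt0.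
have lam1 : forall k, a k / A k.+1 = lambda.
  move=> k; rewrite HAk1 (Hak k); apply: (mulIf a1); rewrite lamE; field.
  by rewrite a1 lt0r_neq0.
have lam2 : forall k, A k / A k.+1 = 1 - lambda.
  move=> k; rewrite HAk1; apply: (mulIf a1); rewrite mulrBl mul1r lamE; field.
  by rewrite a1 lt0r_neq0.
have lam3 : forall j, a j / a j.+1 = 1 - lambda.
  move=> j; rewrite (Hak j) (Hak j.+1) HAk1; apply: (mulIf a1); rewrite mulrBl mul1r lamE; field.
  by rewrite a1 !lt0r_neq0.
have cLE : forall k, tau k / alpha * L = A k.
  by move=> k; case: (Hseq k) => -> _; rewrite /t; field; rewrite L0' lt0r_neq0.
have vx : forall j, s j = z j -> v j = x j by move=> j e; rewrite Hv -e Hxv.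
pose Q k := gradf (xt k) = g k /\ s k = z k.
have step : forall k, Q k -> (forall j, k = j.+1 -> Q j) -> Q k.+1.
  move=> k [Qg Qs] Qp.
  have Fgk : fstar (g k) = (dotp (gradf (xt k)) (xt k) - f (xt k))%:E.
    by rewrite -Qg /fstar F_grad.
  have ak0 : 0 < a k by rewrite Hak mulr_gt0.
  have c0 : 0 < tau k / alpha by case: (Hseq k) => -> _; rewrite divr_gt0 // mulr_gt0.
  have := @gem_step _ _ f gradf Hgrad Hconv L (a k) (tau k / alpha) _ _ (xt k) (g k) (g k.+1)
    ak0 c0 L0 Fgk (Hg k).
  move=> Hgk1.
  have Exq : (a k + tau k / alpha * L)^-1 *:
       (a k *: (v k + (prevseq a 0 k / a k) *: (v k - prevseq v (v 0%N) k)) +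
        (tau k / alpha * L) *: xt k) = xt k.+1.
    rewrite cLE addrC -HA scalerDr !scalerA [_^-1 * a k]mulrC [_^-1 * A k]mulrC.
    rewrite lam1 lam2 (vx k Qs).
    case: k {Qg Qs Fgk ak0 c0 Hgk1} Qp => [|j] Qp /=.
      by rewrite mul0r scale0r addr0 Hxt Hxt0 Hy0 addrC.
    rewrite lam3 (vx j (Qp j erefl).2) (Hxt j.+1) (Hy j) (Hxt j).
    by apply/matrixP => i l; rewrite !mxE; ring.
  rewrite Exq in Hgk1.
  split; first by rewrite Hgk1.
  by rewrite Hs Hz lam1 lam2 Qs Hgk1.
have QQ : forall k, Q k /\ Q k.+1.
  have Q0 : Q 0%N by split; rewrite ?Hxt0 ?Hg0 ?Hs0 ?Hz0.
  elim => [|k [Qk Qk1]]; first by split => //; apply: step => // j.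
  split => //; apply: step => // j [<-].
  done.
move=> k; have [[Qg Qs] _] := QQ k.
by split => //; split => //; rewrite Hv -Qs Hxv.
Qed.
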